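(* Let $\tau\in\mathcal{L}$ and $a\in\mathbb{R}$. Then $\mathcal{N}_\tau(a)\neq\mathcal{N}_\eta(a)$ if and only if every set in $\mathcal{N}_\tau(a)$ is an unbounded subset of $\mathbb{R}$.
   Context: $\eta$ denotes the Euclidean topology on $\mathbb{R}$. $\mathcal{L}$ denotes the family of all Hausdorff topologies $\tau$ on $\mathbb{R}$ with $\tau\subset\eta$. $\mathcal{N}_\tau(a)$ denotes the filter of neighborhoods of $a$ in $(\mathbb{R},\tau)$. *)

(* Defs.v *)
(* The real line is an arbitrary realType R
   (i.e. a model of the reals); eta is its canonical (Euclidean) topology. *)
From HB Require Import structures.
From mathcomp Require Import all_boot all_order all_algebra.
From mathcomp Require Import all_classical all_reals all_analysis.
Set Implicit Arguments. Unset Strict Implicit. Unset Printing Implicit Defensive.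
Import Order.TTheory GRing.Theory Num.Theory.
Import numFieldNormedType.Exports.
Local Open Scope classical_set_scope.
Local Open Scope ring_scope.

Definition is_topology {R : realType} (tau : set (set R)) : Prop :=
  tau setT /\ tau set0 /\
  (forall F : set (set R), F `<=` tau -> tau (\bigcup_(A in F) A)) /\
  (forall A B, tau A -> tau B -> tau (A `&` B)).

Definition is_hausdorff {R : realType} (tau : set (set R)) : Prop :=
  forall x y : R, x <> y ->
    exists U V, tau U /\ tau V /\ U x /\ V y /\ U `&` V = set0.

Definition coarser_than_euclid {R : realType} (tau : set (set R)) : Prop :=
  forall U, tau U -> open U.

Definition in_L {R : realType} (tau : set (set R)) : Prop :=
  is_topology tau /\ is_hausdorff tau /\ coarser_than_euclid tau.

Definition nbhs_tau {R : realType} (tau : set (set R)) (a : R) : set (set R) :=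
  [set N | exists U, tau U /\ U a /\ U `<=` N].

(* Main.v *)
Require Import Defs.
From HB Require Import structures.
From mathcomp Require Import all_boot all_order all_algebra.
From mathcomp Require Import all_classical all_reals all_analysis.
Import Order.TTheory GRing.Theory Num.Theory.
Import numFieldNormedType.Exports.
From mathcomp Require Import ring lra.
Local Open Scope classical_set_scope.
Local Open Scope ring_scope.

Lemma fin_sep (R : realType) (tau : set (set R)) (a : R) :
  is_topology tau -> forall (s : seq (set R)),
  (forall U, U \in s -> exists W, tau W /\ W a /\ U `&` W = set0) ->
  exists W, tau W /\ W a /\ forall U, U \in s -> U `&` W = set0.
Proof.
move=> [tT [t0 [tU tI]]]; elim=> [|U s IH] H.
  by exists setT; split => //; split => // U; rewrite in_nil.
have [W [tW [Wa UW]]] := H U (mem_head _ _).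
have [W' [tW' [W'a sW']]] : exists W, tau W /\ W a /\ forall U, U \in s -> U `&` W = set0.
  by apply: IH => V Vs; apply: H; rewrite in_cons Vs orbT.
exists (W `&` W'); split; first exact: tI.
split; first by [].
move=> V; rewrite in_cons => /orP[/eqP->|Vs].
  by rewrite setIA UW set0I.
by rewrite setICA (sW' V Vs) setI0.
Qed.

Lemma bounded_ball (R : realType) (a : R) : [bounded x | x in ball a 1].
Proof.
rewrite /bounded_near; near=> M => x /=.
rewrite /ball /= => h.
apply: (@le_trans _ _ (`|a| + 1)).
  have := ler_normB a (a - x).
  have -> : a - (a - x) = x by ring.
  move=> /le_trans; apply.
  by rewrite lerD2l ltW.
near: M; apply: nbhs_pinfty_ge; exact: num_real.
Unshelve. all: by end_near. Qed.

Theorem proposition1 (R : realType) (tau : set (set R)) (a : R) :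
  in_L tau ->
  (nbhs_tau tau a <> (nbhs a : set (set R)) <->
   forall N : set R, nbhs_tau tau a N -> ~ [bounded x | x in N]).
Proof.
move=> [top [haus coarse]]; split; last first.
  move=> Hall Heq; apply: (Hall (ball a 1)); last exact: bounded_ball.
  by rewrite Heq; apply: nbhsx_ballx.
move=> Hne N HN Nb; apply: Hne.
have [U [tU [Ua UN]]] := HN.
have [M M0 HM] := ex_strict_bound_gt0 Nb.
rewrite eqEsubset; split.
  move=> V [U' [tU' [U'a U'V]]]; rewrite nbhsE; exists U' => //; split.
    exact: coarse.
  exact: U'a.
move=> V; rewrite nbhsE => -[V' [oV' V'a] V'V].
have cK := compact_closedI (@segment_compact R (-M) M) (open_closedC oV').
rewrite compact_cover in cK.
have [|D' D'D cov] := cK (set R)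
  [set Q : set R | tau Q /\ exists W, tau W /\ W a /\ Q `&` W = set0] id
  (fun Q DO => coarse Q DO.1).
  move=> x [xM xV'].
  have xa : x <> a by move=> xa; apply: xV'; rewrite xa.
  have [Q [W [tO [tW [Ox [Wa OW]]]]]] := haus x a xa.
  by exists Q => //; split => //; exists W.
have := @fin_sep R tau a top (finmap.enum_fset D').
case.
  move=> Q /D'D; rewrite inE => -[_ ?]; done.
move=> W [tW [Wa sW]].
exists (U `&` W); split; first exact: top.2.2.2 _ _ tU tW.
split; first by [].
move=> y [Uy Wy]; apply: V'V; apply: contrapT => nV'y.
have Ky : (`[-M, M]%classic `&` ~` V') y.
  split => //=; rewrite in_itv /=.
  by rewrite -ler_norml; apply/ltW/HM/UN.
have [Q OD' Oy] := cov y Ky.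
have QW := sW Q OD'.
have : (Q `&` W) y by split.
by rewrite QW.
Qed.
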